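(* Let $R\ge2$, $\nu\in\mathbb{R}$, $m\in\mathbb{Z}$, and suppose $x_0:=\sqrt{\nu^2+m^2}/(4\pi R)\in[1/4,4]$. For $b>a>0$ define $$I(a,b)=\int_a^b\int_0^{2\pi}e(2Rx\cos\phi)\,e^{im\phi}\,x^{i\nu-1}\,d\phi\,dx.$$ Then for all $b>a\ge1/8$, $I(a,b)\ll\log R/R$, with an absolute implied constant.
   Context: $e(x)=e^{2\pi i x}$. *)

(* Defs.v *)
From Stdlib Require Import Reals.
From Coquelicot Require Import Coquelicot.
Open Scope R_scope.

Definition Cexp (z : C) : C :=
  Cmult (RtoC (exp (Re z))) (cos (Im z), sin (Im z)).

Definition e (x : R) : C := Cexp (0, 2 * PI * x).

Definition Cpow_pos (x : R) (s : C) : C := Cexp (Cmult s (RtoC (ln x))).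

(* RInt is taken in C viewed as a complete normed R-module (componentwise Riemann integral).
   I(a,b) = int_a^b int_0^{2pi} e(2Rx cos phi) e^{i m phi} x^{i nu - 1} dphi dx *)
Definition Iab (R0 nu : R) (m : Z) (a b : R) : C :=
  @RInt C_R_CompleteNormedModule (fun x : R =>
    @RInt C_R_CompleteNormedModule (fun phi : R =>
      Cmult (Cmult (e (2 * R0 * x * cos phi)) (Cexp (0, IZR m * phi)))
            (Cpow_pos x (-1, nu))) 0 (2 * PI)) a b.

(* Main.v *)
Require Import Defs.
From Stdlib Require Import Reals Lra ZArith FunctionalExtensionality.
From Coquelicot Require Import Coquelicot.
Open Scope R_scope.

Lemma exR_cont (f : R -> R) a b : (forall z, Rmin a b <= z <= Rmax a b -> continuous f z) -> ex_RInt f a b.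
Proof. apply (ex_RInt_continuous (V:=R_CompleteNormedModule)). Qed.
Lemma exR_plus (f g : R -> R) a b : ex_RInt f a b -> ex_RInt g a b -> ex_RInt (fun x => f x + g x) a b.
Proof. apply (ex_RInt_plus (V:=R_NormedModule)). Qed.
Lemma exR_minus (f g : R -> R) a b : ex_RInt f a b -> ex_RInt g a b -> ex_RInt (fun x => f x - g x) a b.
Proof. apply (ex_RInt_minus (V:=R_NormedModule)). Qed.
Lemma RInt_plusR (f g : R -> R) a b : ex_RInt f a b -> ex_RInt g a b -> RInt (fun x => f x + g x) a b = RInt f a b + RInt g a b.
Proof. apply (RInt_plus (V:=R_CompleteNormedModule)). Qed.
Lemma RInt_minusR (f g : R -> R) a b : ex_RInt f a b -> ex_RInt g a b -> RInt (fun x => f x - g x) a b = RInt f a b - RInt g a b.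
Proof. apply (RInt_minus (V:=R_CompleteNormedModule)). Qed.
Lemma RInt_scalR (f : R -> R) a b l : ex_RInt f a b -> RInt (fun x => l * f x) a b = l * RInt f a b.
Proof. apply (RInt_scal (V:=R_CompleteNormedModule)). Qed.
Lemma RInt_ChaslesR (f : R -> R) a b c : ex_RInt f a b -> ex_RInt f b c -> RInt f a b + RInt f b c = RInt f a c.
Proof. apply (RInt_Chasles (V:=R_CompleteNormedModule)). Qed.
Lemma RInt_extR (f g : R -> R) a b : (forall x, Rmin a b < x < Rmax a b -> f x = g x) -> RInt f a b = RInt g a b.
Proof. apply (RInt_ext (V:=R_CompleteNormedModule)). Qed.
Lemma RInt_constR a b c : RInt (fun _ => c) a b = (b - a) * c.
Proof. rewrite RInt_const. reflexivity. Qed.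
Lemma RInt_derivR (f df : R -> R) a b : (forall x, Rmin a b <= x <= Rmax a b -> is_derive f x (df x)) ->
  (forall x, Rmin a b <= x <= Rmax a b -> continuous df x) -> RInt df a b = f b - f a.
Proof. intros H1 H2. apply is_RInt_unique. apply (is_RInt_derive (V:=R_CompleteNormedModule)); auto. Qed.
Lemma contR (f : R -> R) x : ex_derive f x -> continuous f x.
Proof. apply (ex_derive_continuous (K:=R_AbsRing) (V:=R_NormedModule)). Qed.

Lemma c2_cos (g : R -> R -> R) x y : continuity_2d_pt g x y ->
  continuity_2d_pt (fun u v => cos (g u v)) x y.
Proof. intro H. apply continuity_1d_2d_pt_comp; auto. apply continuity_cos. Qed.
Lemma c2_sin (g : R -> R -> R) x y : continuity_2d_pt g x y ->
  continuity_2d_pt (fun u v => sin (g u v)) x y.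
Proof. intro H. apply continuity_1d_2d_pt_comp; auto. apply continuity_sin. Qed.
Lemma c2_exp (g : R -> R -> R) x y : continuity_2d_pt g x y ->
  continuity_2d_pt (fun u v => exp (g u v)) x y.
Proof. intro H. apply continuity_1d_2d_pt_comp; auto.
  apply derivable_continuous_pt. apply derivable_pt_exp. Qed.
Lemma c2_sqrt (g : R -> R -> R) x y : continuity_2d_pt g x y -> 0 <= g x y ->
  continuity_2d_pt (fun u v => sqrt (g u v)) x y.
Proof. intros H H'. apply continuity_1d_2d_pt_comp; auto.
  apply continuity_pt_sqrt; auto. Qed.
Lemma c2_div (f g : R -> R -> R) x y : continuity_2d_pt f x y -> continuity_2d_pt g x y -> g x y <> 0 ->
  continuity_2d_pt (fun u v => f u v / g u v) x y.
Proof. intros. unfold Rdiv. apply continuity_2d_pt_mult; auto. apply continuity_2d_pt_inv; auto. Qed.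

Lemma c2_pow (g : R -> R -> R) n x y : continuity_2d_pt g x y ->
  continuity_2d_pt (fun u v => g u v ^ n) x y.
Proof. intro H. apply (continuity_1d_2d_pt_comp (fun z => z ^ n)); auto.
  apply derivable_continuous_pt. apply derivable_pt_pow. Qed.

Ltac c2 := repeat first
  [ apply c2_div
  | apply continuity_2d_pt_inv
  | apply continuity_2d_pt_plus
  | apply continuity_2d_pt_minus
  | apply continuity_2d_pt_mult
  | apply continuity_2d_pt_opp
  | apply c2_pow
  | apply c2_cos | apply c2_sin | apply c2_exp
  | apply continuity_2d_pt_id1 | apply continuity_2d_pt_id2
  | apply continuity_2d_pt_const ].


Lemma c2_cont1 (f : R -> R -> R) y t : continuity_2d_pt f y t -> continuous (f y) t.
Proof.
  intro H. apply continuity_pt_filterlim. intros eps Heps.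
  destruct (H (mkposreal eps Heps)) as [d Hd].
  exists d. split. apply cond_pos. intros z [_ Hz].
  simpl. unfold R_dist in *. apply (Hd y z). rewrite Rminus_eq_0, Rabs_R0. apply cond_pos. exact Hz.
Qed.

Lemma param_cont (f : R -> R -> R) (a b x r : R) : a <= b -> 0 < r ->
  (forall y t, Rabs (y - x) < r -> a <= t <= b -> continuity_2d_pt f y t) ->
  continuous (fun y => RInt (f y) a b) x.
Proof.
  intros Hab Hr H.
  assert (Hex : forall y, Rabs (y - x) < r -> ex_RInt (f y) a b).
  { intros y Hy. apply exR_cont. intros z Hz.
    rewrite Rmin_left, Rmax_right in Hz by lra. apply c2_cont1. apply H; auto. }
  apply continuity_pt_filterlim. intros eps Heps.
  set (e' := eps / (b - a + 1)).
  assert (He' : 0 < e') by (unfold e'; apply Rdiv_lt_0_compat; lra).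
  destruct (uniform_continuity_2d_1d' f a b x) with (eps := mkposreal e' He') as [d Hd].
  { intros t Ht. apply H; auto. rewrite Rminus_eq_0, Rabs_R0. lra. }
  exists (Rmin d r). split. apply Rmin_pos; [apply cond_pos|lra].
  intros y [_ Hy]. simpl in *. unfold R_dist in *.
  assert (Hyd : Rabs (y - x) < d) by (eapply Rlt_le_trans; [exact Hy| apply Rmin_l]).
  assert (Hyr : Rabs (y - x) < r) by (eapply Rlt_le_trans; [exact Hy| apply Rmin_r]).
  assert (Hx0 : Rabs (x - x) < r) by (rewrite Rminus_eq_0, Rabs_R0; lra).
  rewrite <- RInt_minusR by auto.
  apply Rle_lt_trans with (RInt (fun _ => e') a b).
  - eapply Rle_trans. apply abs_RInt_le; auto.
    apply exR_minus; auto.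
    apply RInt_le; auto.
    + apply exR_cont. intros z Hz.
      rewrite Rmin_left, Rmax_right in Hz by lra.
      apply (continuous_comp (fun t => f y t - f x t) Rabs).
      apply (continuous_minus (f y) (f x)); apply c2_cont1; apply H; auto.
      apply continuous_Rabs.
    + apply ex_RInt_const.
    + intros t Ht. left.
      apply Rabs_lt_between in Hyd.
      apply (Hd t x t y); try lra.
      rewrite Rminus_eq_0, Rabs_R0. apply cond_pos.
  - rewrite RInt_constR. unfold e'.
    apply Rlt_le_trans with ((b - a + 1) * (eps / (b - a + 1))).
    apply Rmult_lt_compat_r; [auto|lra].
    right. field. lra.
Qed.

Lemma shift_period (G : R -> R) p : (forall x, continuous G x) -> (forall x, G (x + 2*PI) = G x) ->
  RInt (fun t => G (t - p)) 0 (2*PI) = RInt G (-PI) PI.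
Proof.
  intros Hc Hp.
  assert (Hex : forall a b, ex_RInt G a b) by (intros; apply exR_cont; auto).
  transitivity (RInt G (1 * 0 + - p) (1 * (2*PI) + - p)).
  { rewrite <- (RInt_comp_lin (V:=R_CompleteNormedModule)) by auto.
    apply RInt_extR. intros x _. unfold scal; simpl; unfold mult; simpl. rewrite Rmult_1_l. f_equal; ring. }
  replace (1 * 0 + - p) with (-p) by ring. replace (1 * (2*PI) + - p) with (2*PI - p) by ring.
  assert (E3 : RInt G PI (2*PI - p) = RInt G (-PI) (-p)).
  { transitivity (RInt G (1 * (-PI) + 2*PI) (1 * (-p) + 2*PI)).
    f_equal; ring.
    rewrite <- (RInt_comp_lin (V:=R_CompleteNormedModule)) by auto.
    apply RInt_extR. intros x _. unfold scal; simpl; unfold mult; simpl.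
    replace (1 * x + 2*PI) with (x + 2*PI) by ring. rewrite Hp. ring. }
  rewrite <- (RInt_ChaslesR G (-p) (-PI) (2*PI - p)) by auto.
  rewrite <- (RInt_ChaslesR G (-PI) PI (2*PI - p)) by auto.
  rewrite E3. rewrite <- (opp_RInt_swap (V:=R_CompleteNormedModule) G (-PI) (-p)) by auto. unfold opp; simpl. ring.
Qed.

Lemma polar u v : u*u + v*v = 1 -> exists th, cos th = u /\ sin th = v.
Proof.
  intro H.
  assert (Hu : -1 <= u <= 1) by nra.
  assert (Hs : sqrt (1 - u²) = Rabs v).
  { rewrite <- sqrt_Rsqr_abs. f_equal. unfold Rsqr. lra. }
  destruct (Rle_or_lt 0 v) as [Hv|Hv].
  - exists (acos u). split. apply cos_acos; auto. rewrite sin_acos by auto. rewrite Hs. apply Rabs_pos_eq; auto.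
  - exists (- acos u). split. rewrite cos_neg. apply cos_acos; auto.
    rewrite sin_neg, sin_acos by auto. rewrite Hs. rewrite Rabs_left; auto. ring.
Qed.

Lemma sin_periodZ x (k : Z) : sin (x + 2 * PI * IZR k) = sin x.
Proof.
  destruct k as [|p|p].
  - rewrite Rmult_0_r, Rplus_0_r. auto.
  - rewrite <- (positive_nat_Z p), <- INR_IZR_INZ.
    replace (x + 2 * PI * INR (Pos.to_nat p)) with (x + 2 * INR (Pos.to_nat p) * PI) by ring.
    apply sin_period.
  - rewrite <- Pos2Z.opp_pos, opp_IZR.
    rewrite <- (positive_nat_Z p), <- INR_IZR_INZ.
    pattern x at 2. replace x with ((x + 2 * PI * - INR (Pos.to_nat p)) + 2 * INR (Pos.to_nat p) * PI) by ring.
    rewrite sin_period. reflexivity.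
Qed.

Lemma atan_bound_int p k L : 0 < p -> 0 < k ->
  RInt (fun u => / (p + p * k^2 * u^2)) (-L) L <= PI / (p * k).
Proof.
  intros Hp Hk.
  rewrite (RInt_derivR (fun u => atan (k * u) / (p * k))).
  - assert (H1 := atan_bound (k*L)). assert (H2 := atan_bound (k * -L)).
    apply Rmult_le_reg_r with (p * k). nra.
    replace ((atan (k * L) / (p * k) - atan (k * - L) / (p * k)) * (p * k)) with (atan (k*L) - atan (k * -L)) by (field; nra).
    replace (PI / (p * k) * (p * k)) with PI by (field; nra). lra.
  - intros x _. auto_derive. auto.
    assert (0 < 1 + k*x*(k*x*1)) by nra. assert (0 < p + p * k ^ 2 * x ^ 2) by (apply Rplus_lt_le_0_compat; [lra| apply Rmult_le_pos; [nra|apply pow2_ge_0]]).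
    field. repeat split; apply Rgt_not_eq; nra.
  - intros x _. apply continuity_pt_filterlim. apply derivable_continuous_pt.
    apply derivable_pt_inv. apply Rgt_not_eq. apply Rplus_lt_le_0_compat; [lra| apply Rmult_le_pos; [nra|apply pow2_ge_0]]. apply derivable_pt_plus. apply derivable_pt_const.
    apply derivable_pt_mult. apply derivable_pt_const. apply derivable_pt_pow.
Qed.

Lemma atan_bound_int2 p q L : 0 < p -> 0 < q ->
  RInt (fun u => / (p + q * u^2)) (-L) L <= PI / sqrt (p * q).
Proof.
  intros Hp Hq.
  set (k := sqrt (q / p)).
  assert (Hk : 0 < k) by (apply sqrt_lt_R0; apply Rdiv_lt_0_compat; auto).
  assert (Hk2 : k * k = q / p) by (apply sqrt_sqrt; left; apply Rdiv_lt_0_compat; auto).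
  replace (sqrt (p * q)) with (p * k).
  - replace (fun u => / (p + q * u^2)) with (fun u => / (p + p * k^2 * u^2)).
    apply atan_bound_int; auto.
    apply functional_extensionality. intro u. f_equal. replace (k^2) with (k*k) by ring. rewrite Hk2. field. lra.
  - apply Rsqr_inj. apply Rmult_le_pos; lra. apply sqrt_pos.
    rewrite Rsqr_sqrt by nra. unfold Rsqr. replace (p * k * (p * k)) with (p * p * (k * k)) by ring.
    rewrite Hk2. field. lra.
Qed.

Lemma log_int_pos s e w : 0 < s -> 0 < e -> 0 < sqrt s * w + sqrt (e + s * w^2).
Proof.
  intros Hs He.
  assert (Hss := sqrt_sqrt s (Rlt_le _ _ Hs)).
  assert (H1 : Rabs (sqrt s * w) < sqrt (e + s * w^2)).
  { rewrite <- (sqrt_Rsqr_abs (sqrt s * w)). apply sqrt_lt_1_alt. split. apply Rle_0_sqr.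
    unfold Rsqr. replace (sqrt s * w * (sqrt s * w)) with (sqrt s * sqrt s * w^2) by ring. rewrite Hss. lra. }
  apply Rabs_def2 in H1. lra.
Qed.

Lemma log_int s e c L : 0 < s -> 0 < e -> 0 <= L ->
  RInt (fun u => / sqrt (e + s * (u - c)^2)) (c - L) (c + L) <= ln (4 + 4 * s * L^2 / e) / sqrt s.
Proof.
  intros Hs He HL.
  assert (Hss := sqrt_sqrt s (Rlt_le _ _ Hs)).
  assert (Hsp : 0 < sqrt s) by (apply sqrt_lt_R0; auto).
  assert (Hpos : forall w, 0 < e + s * w^2) by (intro w; assert (0 <= w^2) by apply pow2_ge_0; nra).
  rewrite (RInt_derivR (fun u => ln (sqrt s * (u - c) + sqrt (e + s * (u - c)^2)) / sqrt s)).
  - replace (c + L - c) with L by ring. replace (c - L - c) with (-L) by ring.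
    assert (HA := log_int_pos s e L Hs He). assert (HB := log_int_pos s e (-L) Hs He).
    assert (HS2 := sqrt_sqrt (e + s * L^2) (Rlt_le _ _ (Hpos L))).
    replace ((-L)^2) with (L^2) in * by ring.
    set (S := sqrt (e + s * L ^ 2)) in *. set (r := sqrt s) in *.
    unfold Rdiv. rewrite <- Rmult_minus_distr_r. apply Rmult_le_compat_r.
    left; apply Rinv_0_lt_compat; auto.
    rewrite <- ln_div by auto. apply ln_le. apply Rdiv_lt_0_compat; auto.
    assert (HAB : (r * L + S) * (r * -L + S) = e).
    { replace ((r * L + S) * (r * -L + S)) with (S * S - (r * r) * L^2) by ring. rewrite HS2, Hss. ring. }
    assert (HrL : r * L <= S).
    { apply Rsqr_incr_0_var. unfold Rsqr. replace (r * L * (r * L)) with (r * r * L^2) by ring.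
      rewrite Hss, HS2. assert (0 <= L^2) by apply pow2_ge_0. lra. apply sqrt_pos. }
    apply Rmult_le_reg_r with (r * -L + S); auto.
    unfold Rdiv. rewrite Rmult_assoc, Rinv_l, Rmult_1_r by lra.
    apply Rmult_le_reg_r with (r * L + S); auto.
    replace ((4 + 4 * s * L ^ 2 * / e) * (r * - L + S) * (r * L + S)) with ((4 + 4 * s * L ^ 2 * / e) * e) by (rewrite <- HAB; ring).
    replace ((4 + 4 * s * L ^ 2 * / e) * e) with (4 * (e + s * L^2)) by (field; lra).
    rewrite <- HS2. assert (0 <= r * L) by (apply Rmult_le_pos; lra). nra.
  - intros x _. auto_derive.
    + replace ((x + - c) * ((x + - c) * 1)) with ((x-c)^2) by ring. replace (x + - c) with (x - c) by ring.
      split; [|split]; auto. apply log_int_pos; auto.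
    + replace ((x + - c) * ((x + - c) * 1)) with ((x-c)^2) by ring. replace (x + - c) with (x - c) by ring.
      assert (HP := log_int_pos s e (x-c) Hs He).
      assert (HS : 0 < sqrt (e + s * (x - c) ^ 2)) by (apply sqrt_lt_R0; auto).
      set (S := sqrt (e + s * (x - c) ^ 2)) in *. set (r := sqrt s) in *.
      rewrite <- Hss. field. repeat split; apply Rgt_not_eq; auto.
  - intros x _. apply contR. auto_derive.
    replace ((x + - c) * ((x + - c) * 1)) with ((x-c)^2) by ring.
    assert (HS : 0 < sqrt (e + s * (x - c) ^ 2)) by (apply sqrt_lt_R0; auto).
    repeat split; auto. apply Rgt_not_eq; auto.
Qed.

Section Core.
Variables (K nu m c lam : R).
Hypothesis Hlam : 0 < lam.

Definition Psi t f := K * exp t * cos f + nu * t + m * f + c.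
Definition Pf t f := K * exp t * cos f + nu.
Definition Qf t f := m - K * exp t * sin f.
Definition Nf t f := Pf t f ^ 2 + Qf t f ^ 2 + lam.
Definition F1 t f := Pf t f * sin (Psi t f) / Nf t f.
Definition F2 t f := Qf t f * sin (Psi t f) / Nf t f.
Definition E1 t f :=
  (K * exp t * cos f * sin (Psi t f) + Pf t f * Pf t f * cos (Psi t f)) / Nf t f
  - Pf t f * sin (Psi t f) * (2 * Pf t f * (K * exp t * cos f) + 2 * Qf t f * (- K * exp t * sin f)) / (Nf t f ^ 2).
Definition E2 t f :=
  (- K * exp t * cos f * sin (Psi t f) + Qf t f * Qf t f * cos (Psi t f)) / Nf t f
  - Qf t f * sin (Psi t f) * (2 * Pf t f * (- K * exp t * sin f) + 2 * Qf t f * (- K * exp t * cos f)) / (Nf t f ^ 2).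
Definition Dd t f := 2 * K * exp t * ((Pf t f ^ 2 - Qf t f ^ 2) * cos f - 2 * Pf t f * Qf t f * sin f).
Definition Zf t f := lam * cos (Psi t f) / Nf t f + sin (Psi t f) * Dd t f / (Nf t f ^ 2).

Lemma Nf_pos t f : 0 < Nf t f.
Proof. unfold Nf. assert (0 <= Pf t f ^ 2) by apply pow2_ge_0. assert (0 <= Qf t f ^ 2) by apply pow2_ge_0. lra. Qed.

Lemma decomp t f : cos (Psi t f) = E1 t f + E2 t f + Zf t f.
Proof.
  assert (H := Nf_pos t f). unfold E1, E2, Zf, Dd.
  assert (HN : Nf t f = Pf t f ^ 2 + Qf t f ^ 2 + lam) by reflexivity.
  field_simplify_eq; [|lra]. rewrite HN. ring.
Qed.

Ltac nz t f := match goal with |- ?a <> 0 => replace a with (Nf t f) by (unfold Nf, Pf, Qf; ring); apply Rgt_not_eq, Nf_pos end.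

Lemma dF1 t f : is_derive (fun u => F1 u f) t (E1 t f).
Proof.
  unfold F1, E1, Nf, Pf, Qf, Psi. auto_derive.
  - nz t f.
  - field. repeat split; nz t f.
Qed.

Lemma dF2 t f : is_derive (fun u => F2 t u) f (E2 t f).
Proof.
  unfold F2, E2, Nf, Pf, Qf, Psi. auto_derive.
  - nz t f.
  - field. repeat split; nz t f.
Qed.

Lemma cE1 x y : continuity_2d_pt E1 x y.
Proof. unfold E1, Nf, Pf, Qf, Psi. c2. all: cbv beta; apply Rgt_not_eq; try apply pow_lt; exact (Nf_pos x y).
Qed.
Lemma cZ x y : continuity_2d_pt Zf x y.
Proof. unfold Zf, Dd, Nf, Pf, Qf, Psi. c2. all: cbv beta; apply Rgt_not_eq; try apply pow_lt; exact (Nf_pos x y).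
Qed.
Lemma cF1 x y : continuity_2d_pt F1 x y.
Proof. unfold F1, Nf, Pf, Qf, Psi. c2. all: cbv beta; apply Rgt_not_eq; try apply pow_lt; exact (Nf_pos x y).
Qed.
Lemma cE2 x y : continuity_2d_pt E2 x y.
Proof. unfold E2, Nf, Pf, Qf, Psi. c2. all: cbv beta; apply Rgt_not_eq; try apply pow_lt; exact (Nf_pos x y).
Qed.
Lemma cCos x y : continuity_2d_pt (fun t f => cos (Psi t f)) x y.
Proof. unfold Psi. c2. Qed.

Lemma ex1 (g : R -> R -> R) t a b : (forall x y, continuity_2d_pt g x y) -> ex_RInt (g t) a b.
Proof. intro H. apply exR_cont. intros. apply c2_cont1. apply H. Qed.

Lemma pc (g : R -> R -> R) x : (forall x y, continuity_2d_pt g x y) -> continuous (fun t => RInt (g t) 0 (2*PI)) x.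
Proof. intro H. apply (param_cont g 0 (2*PI) x 1). assert (0 < PI) by apply PI_RGT_0. lra. lra. intros; apply H. Qed.

Lemma exo (g : R -> R -> R) a b : (forall x y, continuity_2d_pt g x y) -> ex_RInt (fun t => RInt (g t) 0 (2*PI)) a b.
Proof. intro H. apply exR_cont. intros. apply pc. auto. Qed.

Variable mz : Z.
Hypothesis Hm : m = IZR mz.

Lemma E2_int0 t : RInt (E2 t) 0 (2*PI) = 0.
Proof.
  rewrite (RInt_derivR (F2 t)).
  - unfold F2, Nf, Pf, Qf, Psi. rewrite cos_2PI, sin_2PI, cos_0, sin_0.
    replace (K * exp t * 1 + nu * t + m * (2 * PI) + c) with ((K * exp t * 1 + nu * t + m * 0 + c) + 2 * PI * IZR mz) by (rewrite Hm; ring).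
    rewrite sin_periodZ. apply Rminus_diag_eq. reflexivity.
  - intros x _; exact (dF2 t x).
  - intros; apply c2_cont1, cE2.
Qed.

Lemma W_deriv t : is_derive (fun u => RInt (F1 u) 0 (2*PI)) t (RInt (E1 t) 0 (2*PI)).
Proof.
  assert (H := is_derive_RInt_param F1 0 (2*PI) t).
  replace (RInt (E1 t) 0 (2*PI)) with (RInt (fun f => Derive (fun u => F1 u f) t) 0 (2*PI)).
  apply H.
  - apply filter_forall. intros; eexists; apply dF1.
  - intros f _. apply continuity_2d_pt_ext with (f := E1).
    intros; symmetry; apply is_derive_unique, dF1. apply cE1.
  - apply filter_forall. intros; apply ex1, cF1.
  - apply RInt_extR. intros; apply is_derive_unique, dF1.
Qed.

Lemma main_ident A B :
 RInt (fun t => RInt (fun f => cos (Psi t f)) 0 (2*PI)) A B =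
 RInt (F1 B) 0 (2*PI) - RInt (F1 A) 0 (2*PI) + RInt (fun t => RInt (Zf t) 0 (2*PI)) A B.
Proof.
  transitivity (RInt (fun t => RInt (E1 t) 0 (2*PI) + RInt (Zf t) 0 (2*PI)) A B).
  - apply RInt_extR. intros t _.
    rewrite (RInt_extR _ (fun f => (E1 t f + E2 t f) + Zf t f)) by (intros; apply decomp).
    rewrite (RInt_plusR (fun f => E1 t f + E2 t f) (Zf t)), (RInt_plusR (E1 t) (E2 t)), E2_int0. ring.
    apply (ex1 E1); exact cE1. apply (ex1 E2); exact cE2. apply exR_plus; [apply (ex1 E1); exact cE1|apply (ex1 E2); exact cE2]. apply (ex1 Zf); exact cZ.
  - rewrite RInt_plusR. f_equal.
    apply (RInt_derivR (fun u => RInt (F1 u) 0 (2*PI))). intros; apply W_deriv. intros; apply pc, cE1.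
    apply exo, cE1. apply exo, cZ.
Qed.
End Core.

Lemma sin_third u : 0 <= u <= PI / 2 -> u / 3 <= sin u.
Proof.
  intros Hu. assert (HP := PI_4).
  destruct (SIN u) as [H _]; try lra.
  eapply Rle_trans; [|exact H].
  unfold sin_lb, sin_approx, sin_term. simpl.
  assert (u <= 2) by lra.
  assert (0 <= u*u <= 4) by nra.
  field_simplify. 
  assert (0 <= u) by lra.
  assert (E : (-720 * u ^ 7 + 30240 * u ^ 5 - 604800 * u ^ 3 + 3628800 * u) / 3628800 - u/3
     = u * ((2/3 - (u*u)/6) + (u*u)*(u*u)*(1/120 - (u*u)/5040))) by field.
  assert (0 <= u * ((2/3 - (u*u)/6) + (u*u)*(u*u)*(1/120 - (u*u)/5040))).
  { apply Rmult_le_pos; auto. apply Rplus_le_le_0_compat. lra.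
    apply Rmult_le_pos. apply Rmult_le_pos; lra. lra. }
  lra.
Qed.

Lemma one_minus_cos p : -PI <= p <= PI -> p^2 / 18 <= 1 - cos p.
Proof.
  intros Hp.
  replace p with (2 * (p/2)) at 2 by field.
  rewrite cos_2a_sin.
  assert (Hs : (p/2)^2 / 9 <= sin (p/2) * sin (p/2)).
  { destruct (Rle_or_lt 0 p).
    - assert (H1 := sin_third (p/2) ltac:(lra)). nra.
    - assert (H1 := sin_third (-(p/2)) ltac:(lra)). rewrite sin_neg in H1. nra. }
  nra.
Qed.

Section Bounds.
Variables (K nu m c x0 mu ph0 : R).
Hypothesis HK : 0 < K.
Hypothesis Hmu : 0 < mu.
Hypothesis Hx0 : 1/4 <= x0 <= 4.
Hypothesis Hnu : nu = - K * x0 * cos ph0.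
Hypothesis Hm : m = K * x0 * sin ph0.

Lemma Hlam0 : 0 < K^2 * mu.
Proof. apply Rmult_lt_0_compat; auto. apply pow_lt; auto. Qed.

Lemma Ngeom t f : Nf K nu m (K^2*mu) t f =
  K^2 * ((exp t - x0)^2 + 2 * x0 * exp t * (1 - cos (f - ph0))) + K^2 * mu.
Proof.
  unfold Nf, Pf, Qf. rewrite cos_minus, Hnu, Hm.
  assert (H1 := sin2_cos2 f). assert (H2 := sin2_cos2 ph0). unfold Rsqr in *.
  apply Rminus_diag_uniq.
  transitivity (K^2 * exp t ^2 * (sin f * sin f + cos f * cos f - 1) + K^2 * x0^2 * (sin ph0 * sin ph0 + cos ph0 * cos ph0 - 1)).
  ring. rewrite H1, H2. ring.
Qed.

Lemma F1b t f : Rabs (F1 K nu m c (K^2*mu) t f) <= / sqrt (Nf K nu m (K^2*mu) t f).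
Proof.
  unfold F1. assert (HN := Nf_pos K nu m (K^2*mu) Hlam0 t f).
  set (N := Nf K nu m (K^2*mu) t f) in *.
  assert (HP : Pf K nu t f ^ 2 <= N).
  { unfold N, Nf. assert (0 <= Qf K m t f ^ 2) by apply pow2_ge_0. nra. }
  assert (HsN : 0 < sqrt N) by (apply sqrt_lt_R0; auto).
  assert (HPa : Rabs (Pf K nu t f) <= sqrt N).
  { rewrite <- sqrt_Rsqr_abs. apply sqrt_le_1_alt. unfold Rsqr. simpl in HP. lra. }
  unfold Rdiv. rewrite Rabs_mult, Rabs_mult, (Rabs_pos_eq (/N)) by (left; apply Rinv_0_lt_compat; auto).
  assert (Hs := Rabs_le _ _ (SIN_bound (Psi K nu m c t f))).
  assert (Hs' : Rabs (sin (Psi K nu m c t f)) <= 1).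
  { apply Rabs_le. apply SIN_bound. }
  apply Rle_trans with (sqrt N * / N).
  - apply Rmult_le_compat_r. left; apply Rinv_0_lt_compat; auto.
    rewrite <- (Rmult_1_r (sqrt N)). apply Rmult_le_compat; auto using Rabs_pos.
  - right. rewrite <- (sqrt_sqrt N) at 2 by lra. field. lra.
Qed.

Lemma Zb t f : Rabs (Zf K nu m c (K^2*mu) t f) <= (K^2*mu + 2*K*exp t) / Nf K nu m (K^2*mu) t f.
Proof.
  unfold Zf, Dd. assert (HN := Nf_pos K nu m (K^2*mu) Hlam0 t f).
  assert (HNd : Nf K nu m (K^2*mu) t f = Pf K nu t f ^ 2 + Qf K m t f ^ 2 + K^2*mu) by reflexivity.
  set (N := Nf K nu m (K^2*mu) t f) in *.
  set (P := Pf K nu t f) in *. set (Q := Qf K m t f) in *.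
  assert (He := exp_pos t).
  assert (HD : Rabs ((P ^ 2 - Q ^ 2) * cos f - 2 * P * Q * sin f) <= P^2 + Q^2).
  { assert (H1 := sin2_cos2 f). unfold Rsqr in H1.
    assert (E : (P^2+Q^2)^2 - ((P ^ 2 - Q ^ 2) * cos f - 2 * P * Q * sin f)^2 =
       ((P ^ 2 - Q ^ 2) * sin f + 2 * P * Q * cos f)^2).
    { apply Rminus_diag_uniq.
      transitivity ((P^2+Q^2)^2 * (1 - (sin f * sin f + cos f * cos f))). ring. rewrite H1. ring. }
    rewrite <- (Rabs_pos_eq (P^2 + Q^2)) by (assert (0 <= P^2) by apply pow2_ge_0; assert (0 <= Q^2) by apply pow2_ge_0; lra).
    apply Rsqr_le_abs_0. unfold Rsqr.
    assert (0 <= ((P ^ 2 - Q ^ 2) * sin f + 2 * P * Q * cos f)^2) by apply pow2_ge_0. nra. }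
  assert (Hc := Rabs_le _ _ (COS_bound (Psi K nu m c t f))).
  assert (Hc' : Rabs (cos (Psi K nu m c t f)) <= 1) by (apply Rabs_le; apply COS_bound).
  assert (Hs' : Rabs (sin (Psi K nu m c t f)) <= 1) by (apply Rabs_le; apply SIN_bound).
  assert (HL := Hlam0).
  eapply Rle_trans. apply Rabs_triang.
  assert (T1 : Rabs (K ^ 2 * mu * cos (Psi K nu m c t f) / N) <= K^2*mu / N).
  { unfold Rdiv. rewrite !Rabs_mult, (Rabs_pos_eq (K^2)), (Rabs_pos_eq mu) by (try apply pow2_ge_0; lra).
    rewrite (Rabs_pos_eq (/N)) by (left; apply Rinv_0_lt_compat; auto).
    assert (0 < /N) by (apply Rinv_0_lt_compat; auto).
    assert (0 <= K^2) by apply pow2_ge_0.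
    assert (0 <= K^2 * mu) by nra.
    apply Rmult_le_compat_r. lra. 
    rewrite <- (Rmult_1_r (K^2*mu)) at 2. apply Rmult_le_compat_l; lra. }
  assert (HPQ : P^2 + Q^2 <= N) by lra.
  assert (T2 : Rabs (sin (Psi K nu m c t f) * (2 * K * exp t * ((P ^ 2 - Q ^ 2) * cos f - 2 * P * Q * sin f)) / N ^ 2)
     <= 2 * K * exp t / N).
  { unfold Rdiv. rewrite !Rabs_mult. rewrite (Rabs_pos_eq (/ N^2)) by (left; apply Rinv_0_lt_compat; apply pow_lt; auto).
    rewrite (Rabs_pos_eq 2), (Rabs_pos_eq K), (Rabs_pos_eq (exp t)) by lra.
    apply Rle_trans with (1 * (2 * K * exp t * N) * / N ^ 2).
    - apply Rmult_le_compat_r. left; apply Rinv_0_lt_compat; apply pow_lt; auto.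
      apply Rmult_le_compat; auto using Rabs_pos.
      repeat apply Rmult_le_pos; try lra. apply Rabs_pos.
      apply Rmult_le_compat_l. repeat apply Rmult_le_pos; lra. lra.
    - right. field. lra. }
  unfold Rdiv in *. lra.
Qed.
End Bounds.

Lemma cont_abs (g : R -> R) x : continuous g x -> continuous (fun y => Rabs (g y)) x.
Proof. intro H. apply (continuous_comp g Rabs); auto. apply continuous_Rabs. Qed.

Lemma cont_invsqrt (g : R -> R) x : continuous g x -> 0 < g x -> continuous (fun y => / sqrt (g y)) x.
Proof.
  intros Hg Hp. apply (continuous_comp g (fun y => / sqrt y)); auto.
  apply contR. auto_derive. split; auto. split; auto. apply Rgt_not_eq, sqrt_lt_R0; auto.
Qed.

Section B2.
Variables (K nu m c x0 mu ph0 : R).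
Hypothesis HK : 0 < K.
Hypothesis Hmu : 0 < mu.
Hypothesis Hx0 : 1/4 <= x0 <= 4.
Hypothesis Hnu : nu = - K * x0 * cos ph0.
Hypothesis Hm : m = K * x0 * sin ph0.

Definition Xg t p := (exp t - x0)^2 + 2 * x0 * exp t * (1 - cos p).

Lemma Xg_nonneg t p : 0 <= Xg t p.
Proof. unfold Xg. assert (0 <= (exp t - x0)^2) by apply pow2_ge_0. assert (H1 := COS_bound p). assert (0 < exp t) by apply exp_pos.
  assert (0 <= 2 * x0 * exp t * (1 - cos p)). repeat apply Rmult_le_pos; lra. lra. Qed.

Lemma Xg_lb t p : 1/8 <= exp t -> -PI <= p <= PI -> (exp t - x0)^2 + x0 * exp t * p^2 / 9 <= Xg t p.
Proof. intros He Hp. unfold Xg. assert (H := one_minus_cos p Hp).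
  apply Rplus_le_compat_l. replace (x0 * exp t * p ^ 2 / 9) with (2 * x0 * exp t * (p^2/18)) by field.
  apply Rmult_le_compat_l; auto. assert (0 < exp t) by apply exp_pos. nra. Qed.

Lemma XN_pos t p : 0 < K^2 * Xg t p + K^2 * mu.
Proof. assert (H := Xg_nonneg t p). assert (H2 := Hlam0 K mu HK Hmu). assert (0 <= K^2) by apply pow2_ge_0. nra. Qed.

Lemma shiftN (h : R -> R) t : (forall y, 0 < y -> continuous h y) ->
  RInt (fun f => h (Nf K nu m (K^2*mu) t f)) 0 (2*PI) = RInt (fun p => h (K^2 * Xg t p + K^2 * mu)) (-PI) PI.
Proof.
  intro Hh.
  rewrite (RInt_extR _ (fun f => h (K^2 * Xg t (f - ph0) + K^2 * mu))).
  2: { intros f _. rewrite (Ngeom K nu m x0 mu ph0); auto. }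
  apply (shift_period (fun p => h (K^2 * Xg t p + K^2 * mu))).
  - intro p. apply (continuous_comp (fun p => K^2 * Xg t p + K^2 * mu) h).
    apply contR. unfold Xg. auto_derive. auto.
    apply Hh. assert (H := Xg_nonneg t p). assert (H2 := Hlam0 K mu HK Hmu). assert (0 <= K^2) by apply pow2_ge_0. nra.
  - intro p. unfold Xg. rewrite cos_plus, cos_2PI, sin_2PI. f_equal. f_equal. f_equal. f_equal. f_equal. ring.
Qed.

Lemma Wbound t : 1/8 <= exp t ->
  Rabs (RInt (F1 K nu m c (K^2*mu) t) 0 (2*PI)) <= / K * (ln (4 + 4 * (1/288) * PI^2 / mu) / sqrt (1/288)).
Proof.
  intro Het.
  assert (HPI := PI_RGT_0). assert (HL := Hlam0 K mu HK Hmu).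
  assert (HNp := fun f => Nf_pos K nu m (K^2*mu) HL t f).
  assert (HK2 : 0 < K^2) by (apply pow_lt; auto).
  eapply Rle_trans. apply abs_RInt_le. lra. apply (ex1 (F1 K nu m c (K^2*mu))). apply cF1; auto.
  eapply Rle_trans. apply RInt_le with (g := fun f => / sqrt (Nf K nu m (K^2*mu) t f)). lra.
  - apply exR_cont. intros. apply cont_abs. apply c2_cont1. apply cF1; auto.
  - apply exR_cont. intros. apply cont_invsqrt; auto. apply contR. unfold Nf, Pf, Qf. auto_derive. auto.
  - intros f _. apply F1b; auto.
  - rewrite (shiftN (fun y => / sqrt y)).
    2: { intros y Hy. apply cont_invsqrt; auto. apply continuous_id. }
    eapply Rle_trans. apply RInt_le with (g := fun p => / K * / sqrt (mu + (1/288) * (p - 0)^2)). lra.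
    + apply exR_cont. intros. apply cont_invsqrt. apply contR. unfold Xg. auto_derive. auto. apply XN_pos.
    + apply exR_cont. intros. apply contR. auto_derive. 
      assert (0 <= (z - 0) * ((z - 0) * 1)) by nra.
      split. lra. split. apply Rgt_not_eq, sqrt_lt_R0. lra. auto.
    + intros p Hp.
      assert (HX := Xg_lb t p Het ltac:(lra)).
      assert (Hxe : 1/32 <= x0 * exp t) by nra.
      assert (HX2 : mu + 1/288 * (p - 0)^2 <= Xg t p + mu).
      { assert (0 <= (exp t - x0)^2) by apply pow2_ge_0. assert (0 <= p^2) by apply pow2_ge_0.
        replace ((p - 0)^2) with (p^2) by ring. nra. }
      assert (H0 : 0 < mu + 1/288 * (p - 0)^2) by (assert (0 <= (p-0)^2) by apply pow2_ge_0; lra).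
      replace (K ^ 2 * Xg t p + K ^ 2 * mu) with (K^2 * (Xg t p + mu)) by ring.
      rewrite sqrt_mult by (try apply pow2_ge_0; assert (H5 := Xg_nonneg t p); lra).
      rewrite sqrt_pow2 by lra.
      rewrite Rinv_mult. apply Rmult_le_compat_l. left; apply Rinv_0_lt_compat; auto.
      apply Rinv_le_contravar. apply sqrt_lt_R0; auto. apply sqrt_le_1_alt. auto.
    + rewrite RInt_scalR.
      2: { apply exR_cont. intros. apply contR. auto_derive.
           assert (0 <= (z - 0) * ((z - 0) * 1)) by nra.
           split. lra. split. apply Rgt_not_eq, sqrt_lt_R0. lra. auto. }
      apply Rmult_le_compat_l. left; apply Rinv_0_lt_compat; auto.
      replace (-PI) with (0 - PI) by ring. replace PI with (0 + PI) at 2 by ring.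
      apply log_int; lra.
Qed.

Definition Gz t := (mu + 2 * exp t / K) * (PI / sqrt (((exp t - x0)^2 + mu) * (x0 * exp t / 9))).

Lemma Zbound t : 1/8 <= exp t ->
  Rabs (RInt (Zf K nu m c (K^2*mu) t) 0 (2*PI)) <= Gz t.
Proof.
  intro Het.
  assert (HPI := PI_RGT_0). assert (HL := Hlam0 K mu HK Hmu).
  assert (HNp := fun f => Nf_pos K nu m (K^2*mu) HL t f).
  assert (HK2 : 0 < K^2) by (apply pow_lt; auto).
  assert (He := exp_pos t).
  eapply Rle_trans. apply abs_RInt_le. lra. apply (ex1 (Zf K nu m c (K^2*mu))). apply cZ; auto.
  eapply Rle_trans. apply RInt_le with (g := fun f => (K^2*mu + 2*K*exp t) / (Nf K nu m (K^2*mu) t f)). lra.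
  - apply exR_cont. intros. apply cont_abs. apply c2_cont1. apply cZ; auto.
  - apply exR_cont. intros. apply contR. unfold Nf, Pf, Qf. auto_derive. apply Rgt_not_eq; exact (HNp z).
  - intros f _. apply Zb; auto.
  - rewrite (shiftN (fun y => (K^2*mu + 2*K*exp t) / y)).
    2: { intros y Hy. apply contR. auto_derive. apply Rgt_not_eq; auto. }
    set (p0 := (exp t - x0)^2 + mu). set (q := x0 * exp t / 9).
    assert (Hp0 : 0 < p0) by (unfold p0; assert (0 <= (exp t - x0)^2) by apply pow2_ge_0; lra).
    assert (Hq : 0 < q) by (unfold q; apply Rdiv_lt_0_compat; [apply Rmult_lt_0_compat|]; lra).
    eapply Rle_trans. apply RInt_le with (g := fun p => (mu + 2 * exp t / K) * / (p0 + q * p^2)). lra.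
    + apply exR_cont. intros. apply contR. unfold Xg. auto_derive. 
      assert (H5 := XN_pos t z). unfold Xg in H5. apply Rgt_not_eq. 
      replace (K ^ 2 * ((exp t - x0) ^ 2 + 2 * x0 * exp t * (1 - cos z)) + K ^ 2 * mu)
        with (K * (K * 1) * ((exp t + - x0) * ((exp t + - x0) * 1) + 2 * x0 * exp t * (1 + - cos z)) + K * (K * 1) * mu) in H5 by ring.
      exact H5.
    + apply exR_cont. intros. apply contR. auto_derive.
      assert (0 <= z * (z * 1)) by nra. apply Rgt_not_eq. nra.
    + intros p Hp.
      assert (HX := Xg_lb t p Het ltac:(lra)).
      assert (Hpos : 0 < p0 + q * p^2) by (assert (0 <= p^2) by apply pow2_ge_0; nra).
      assert (HX2 : p0 + q * p^2 <= Xg t p + mu) by (unfold p0, q; lra).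
      replace ((K ^ 2 * mu + 2 * K * exp t) / (K ^ 2 * Xg t p + K ^ 2 * mu)) with
        ((mu + 2 * exp t / K) * / (Xg t p + mu)).
      2: { assert (H6 := Xg_nonneg t p). field. repeat split; try lra. apply Rgt_not_eq. assert (0 < Xg t p + mu) by lra. nra. }
      apply Rmult_le_compat_l. assert (0 < 2 * exp t / K) by (apply Rdiv_lt_0_compat; lra). lra.
      apply Rinv_le_contravar; auto.
    + rewrite RInt_scalR.
      2: { apply exR_cont. intros. apply contR. auto_derive.
           assert (0 <= z * (z * 1)) by nra. apply Rgt_not_eq. nra. }
      apply Rmult_le_compat_l. assert (0 < 2 * exp t / K) by (apply Rdiv_lt_0_compat; lra). lra.
      apply atan_bound_int2; auto.
Qed.
End B2.

Lemma RInt_mono_int (f : R -> R) a b c d : a <= c -> c <= d -> d <= b ->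
  (forall x, a <= x <= b -> continuous f x) -> (forall x, a <= x <= b -> 0 <= f x) ->
  RInt f c d <= RInt f a b.
Proof.
  intros H1 H2 H3 Hc Hp.
  assert (Hex : forall u v, a <= u -> u <= v -> v <= b -> ex_RInt f u v).
  { intros u v Hu Huv Hv. apply exR_cont. intros z Hz. rewrite Rmin_left, Rmax_right in Hz by lra. apply Hc. lra. }
  rewrite <- (RInt_ChaslesR f a c b) by (apply Hex; lra).
  rewrite <- (RInt_ChaslesR f c d b) by (apply Hex; lra).
  assert (0 <= RInt f a c) by (apply RInt_ge_0; auto; [apply Hex; lra| intros; apply Hp; lra]).
  assert (0 <= RInt f d b) by (apply RInt_ge_0; auto; [apply Hex; lra| intros; apply Hp; lra]).
  lra.
Qed.

Definition jf x0 mu t := sqrt (exp t) / sqrt ((exp t - x0)^2 + mu).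

Lemma exp_sqrt t : sqrt (exp t) = exp (t/2).
Proof.
  replace (exp t) with (exp (t/2) * exp (t/2)) by (rewrite <- exp_plus; f_equal; field).
  apply sqrt_square. left; apply exp_pos.
Qed.

Section J.
Variables (x0 mu : R).
Hypothesis Hmu : 0 < mu.
Hypothesis Hx0 : 1/4 <= x0 <= 4.

Lemma jf_pos t : 0 <= jf x0 mu t.
Proof. unfold jf. apply Rmult_le_pos. apply sqrt_pos. left. apply Rinv_0_lt_compat, sqrt_lt_R0.
  assert (0 <= (exp t - x0)^2) by apply pow2_ge_0. lra. Qed.

Lemma jf_cont t : continuous (jf x0 mu) t.
Proof. apply contR. unfold jf. auto_derive.
  assert (H0 := pow2_ge_0 (exp t + - x0)). simpl in H0. assert (0 < exp t) by apply exp_pos.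
  split; [lra|split; [lra|split; [apply Rgt_not_eq, sqrt_lt_R0; lra|auto]]]. Qed.

Lemma jf_far t : 2 * x0 <= exp t -> jf x0 mu t <= 2 * exp (- t / 2).
Proof.
  intro H. unfold jf. rewrite exp_sqrt.
  assert (He : exp t = exp (t/2) * exp (t/2)) by (rewrite <- exp_plus; f_equal; field).
  assert (Hh := exp_pos (t/2)).
  replace (exp (-t/2)) with (/ exp (t/2)) by (rewrite <- exp_Ropp; f_equal; field).
  assert (Hs : exp t / 2 <= sqrt ((exp t - x0) ^ 2 + mu)).
  { apply Rsqr_incr_0_var. rewrite Rsqr_sqrt. unfold Rsqr. nra. 
    assert (0 <= (exp t - x0)^2) by apply pow2_ge_0. lra. apply sqrt_pos. }
  apply Rle_trans with (exp (t/2) / (exp t / 2)).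
  - unfold Rdiv. apply Rmult_le_compat_l. lra. apply Rinv_le_contravar. assert (0 < exp t) by apply exp_pos. lra. auto.
  - right. rewrite He. field. lra.
Qed.

Lemma jf_near t : 1/8 <= exp t -> exp t <= 2 * x0 -> jf x0 mu t <= 24 * / sqrt (64 * mu + 1 * (t - ln x0)^2).
Proof.
  intros H1 H2. unfold jf.
  assert (Hd : (t - ln x0)^2 / 64 <= (exp t - x0)^2).
  { set (t0 := ln x0). assert (Ex : exp t0 = x0) by (apply exp_ln; lra).
    destruct (Rle_or_lt t0 t).
    - assert (E : exp t = x0 * exp (t - t0)) by (rewrite <- Ex, <- exp_plus; f_equal; ring).
      assert (H3 := exp_ineq1_le (t - t0)).
      assert (x0 * (t - t0) <= exp t - x0) by nra.
      assert (0 <= t - t0) by lra.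
      assert (H5 : (t - t0)/4 <= exp t - x0) by nra.
      apply Rle_trans with (((t-t0)/4)^2). assert (0 <= (t-t0)^2) by apply pow2_ge_0. lra.
      apply pow_incr; lra.
    - assert (E : x0 = exp t * exp (t0 - t)) by (rewrite <- Ex, <- exp_plus; f_equal; ring).
      assert (H3 := exp_ineq1_le (t0 - t)).
      assert (exp t * (t0 - t) <= x0 - exp t) by nra.
      assert (0 <= t0 - t) by lra.
      assert (H5 : (t0 - t)/8 <= x0 - exp t) by nra.
      apply Rle_trans with (((t0-t)/8)^2). replace ((t - t0)^2) with ((t0-t)^2) by ring. assert (0 <= (t0-t)^2) by apply pow2_ge_0. lra.
      replace ((exp t - x0)^2) with ((x0 - exp t)^2) by ring. apply pow_incr; lra. }
  assert (Hs3 : sqrt (exp t) <= 3).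
  { rewrite <- (sqrt_square 3) by lra. apply sqrt_le_1_alt. lra. }
  assert (Hp : 0 < 64 * mu + 1 * (t - ln x0) ^ 2) by (assert (0 <= (t - ln x0)^2) by apply pow2_ge_0; lra).
  assert (Hq : sqrt (64 * mu + 1 * (t - ln x0) ^ 2) / 8 <= sqrt ((exp t - x0) ^ 2 + mu)).
  { replace (sqrt (64 * mu + 1 * (t - ln x0) ^ 2) / 8) with (sqrt ((64 * mu + 1 * (t - ln x0) ^ 2) / 64)).
    apply sqrt_le_1_alt. lra.
    rewrite sqrt_div_alt by lra. f_equal. replace 64 with (8*8) by ring. apply sqrt_square. lra. }
  assert (Hsp : 0 < sqrt (64 * mu + 1 * (t - ln x0) ^ 2)) by (apply sqrt_lt_R0; auto).
  apply Rle_trans with (3 / (sqrt (64 * mu + 1 * (t - ln x0) ^ 2) / 8)).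
  - unfold Rdiv. apply Rmult_le_compat; auto. apply sqrt_pos. left; apply Rinv_0_lt_compat, sqrt_lt_R0.
    assert (0 <= (exp t - x0)^2) by apply pow2_ge_0. lra.
    apply Rinv_le_contravar; auto. lra.
  - right. field. lra.
Qed.

Lemma exJ a b : ex_RInt (jf x0 mu) a b.
Proof. apply exR_cont. intros; apply jf_cont. Qed.

Lemma J_far a b : 1/8 <= exp a -> a <= b -> 2 * x0 <= exp a -> RInt (jf x0 mu) a b <= 12.
Proof.
  intros H1 H2 H3.
  assert (Hmono : forall t, a <= t -> exp a <= exp t).
  { intros t Ht. destruct (Rle_lt_or_eq_dec _ _ Ht). left; apply exp_increasing; auto. rewrite e; lra. }
  eapply Rle_trans. apply RInt_le with (g := fun t => 2 * exp (-t/2)); auto.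
  apply exJ. apply exR_cont. intros. apply contR. auto_derive. auto.
  intros t Ht. apply jf_far. specialize (Hmono t ltac:(lra)). lra.
  rewrite (RInt_derivR (fun t => -4 * exp (-t/2))).
  - assert (exp (-b/2) > 0) by apply exp_pos.
    assert (E : exp (-a/2) = / sqrt (exp a)).
    { rewrite exp_sqrt. rewrite <- exp_Ropp. f_equal. field. }
    assert (Hs : 1/3 <= sqrt (exp a)).
    { rewrite <- (sqrt_square (1/3)) by lra. apply sqrt_le_1_alt. lra. }
    assert (exp (-a/2) <= 3).
    { rewrite E. replace 3 with (/ (1/3)) by field. apply Rinv_le_contravar; lra. }
    lra.
  - intros x _. auto_derive. auto. replace (- x / 2) with (- x * / 2) by reflexivity. lra.
  - intros x _. apply contR. auto_derive. auto.
Qed.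

Lemma exp5 : 32 <= exp 5.
Proof.
  assert (H := exp_ineq1_le 1).
  replace 5 with (1+1+1+1+1) by ring. rewrite !exp_plus.
  assert (2 <= exp 1) by lra. 
  assert (4 <= exp 1 * exp 1) by nra.
  assert (8 <= exp 1 * exp 1 * exp 1) by nra.
  assert (16 <= exp 1 * exp 1 * exp 1 * exp 1) by nra.
  nra.
Qed.

Lemma J_near a : 1/8 <= exp a -> a <= ln (2 * x0) ->
  RInt (jf x0 mu) a (ln (2 * x0)) <= 24 * ln (4 + 4 * 1 * 5^2 / (64 * mu)).
Proof.
  intros H1 H2.
  set (t0 := ln x0). assert (Ex : exp t0 = x0) by (apply exp_ln; lra).
  set (t1 := ln (2 * x0)) in *. assert (Ex1 : exp t1 = 2 * x0) by (apply exp_ln; lra).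
  assert (E5 := exp5).
  assert (Hmono : forall u v, u <= v -> exp u <= exp v).
  { intros u v Ht. destruct (Rle_lt_or_eq_dec _ _ Ht). left; apply exp_increasing; auto. rewrite e; lra. }
  assert (Ha : t0 - 5 <= a).
  { destruct (Rle_or_lt (t0 - 5) a) as [ok|bad]; auto. apply exp_increasing in bad.
    unfold Rminus in bad. rewrite exp_plus, Ex in bad. rewrite exp_Ropp in bad.
    assert (x0 * / exp 5 <= 4 / 32). { apply Rmult_le_compat; try lra. left; apply Rinv_0_lt_compat; lra.
      replace (/32) with (/ 32). apply Rinv_le_contravar; lra. auto. } lra. }
  assert (Hb : t1 <= t0 + 5).
  { destruct (Rle_or_lt t1 (t0 + 5)) as [ok|bad]; auto. apply exp_increasing in bad.
    rewrite exp_plus, Ex, Ex1 in bad. nra. }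
  assert (Hpos : forall t, 0 < 64 * mu + 1 * (t - t0) ^ 2) by (intro t; assert (0 <= (t - t0)^2) by apply pow2_ge_0; lra).
  assert (Hc : forall t, continuous (fun t => 24 * / sqrt (64 * mu + 1 * (t - t0) ^ 2)) t).
  { intro t. apply contR. auto_derive. specialize (Hpos t). simpl in Hpos. replace (t + - t0) with (t - t0) by ring.
    split; auto. split; auto. apply Rgt_not_eq, sqrt_lt_R0; auto. }
  eapply Rle_trans. apply RInt_le with (g := fun t => 24 * / sqrt (64 * mu + 1 * (t - t0)^2)); auto.
  apply exJ. apply exR_cont; auto.
  intros t Ht. apply jf_near. assert (H5 := Hmono a t ltac:(lra)). lra. assert (H5 := Hmono t t1 ltac:(lra)). lra.
  eapply Rle_trans. apply (RInt_mono_int _ (t0 - 5) (t0 + 5)); auto; try lra.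
  intros. left. apply Rmult_lt_0_compat. lra. apply Rinv_0_lt_compat, sqrt_lt_R0; auto.
  rewrite RInt_scalR. apply Rmult_le_compat_l. lra.
  assert (H := log_int 1 (64 * mu) t0 5 ltac:(lra) ltac:(lra) ltac:(lra)).
  rewrite sqrt_1 in H. unfold Rdiv in H. rewrite Rinv_1, Rmult_1_r in H. exact H.
  apply exR_cont. intros. specialize (Hpos z). apply contR. auto_derive. 
  simpl in Hpos. replace (z + - t0) with (z - t0) by ring. split; auto. split; auto. apply Rgt_not_eq, sqrt_lt_R0; auto.
Qed.

Lemma Jbound A B : 1/8 <= exp A -> A <= B ->
  RInt (jf x0 mu) A B <= 24 * ln (4 + 4 * 1 * 5^2 / (64 * mu)) + 12.
Proof.
  intros H1 H2.
  set (t1 := ln (2 * x0)). assert (Ex1 : exp t1 = 2 * x0) by (apply exp_ln; lra).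
  assert (Hmono : forall u v, u <= v -> exp u <= exp v).
  { intros u v Ht. destruct (Rle_lt_or_eq_dec _ _ Ht). left; apply exp_increasing; auto. rewrite e; lra. }
  assert (Hl : 0 <= ln (4 + 4 * 1 * 5^2 / (64 * mu))).
  { rewrite <- ln_1. left. apply ln_increasing. lra. assert (0 < 4 * 1 * 5^2 / (64 * mu)) by (apply Rdiv_lt_0_compat; lra). lra. }
  destruct (Rle_or_lt t1 A) as [HA|HA].
  - pose proof (J_far A B H1 H2 ltac:(rewrite <- Ex1; apply Hmono; auto)). lra.
  - eapply Rle_trans. apply (RInt_mono_int _ A (Rmax B t1)); try lra. apply Rmax_l.
    intros; apply jf_cont. intros; apply jf_pos.
    rewrite <- (RInt_ChaslesR _ A t1 (Rmax B t1)) by apply exJ.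
    pose proof (J_near A H1 ltac:(unfold t1 in HA; lra)).
    pose proof (J_far t1 (Rmax B t1) ltac:(lra) ltac:(apply Rmax_r) ltac:(lra)).
    unfold t1 in *. lra.
Qed.
End J.

Lemma Gz_le K x0 mu t : 0 < K -> 0 < mu -> 1/4 <= x0 <= 4 -> 1/8 <= exp t ->
  Gz K x0 mu t <= 6 * PI * (8 * mu + 2 / K) * jf x0 mu t.
Proof.
  intros HK Hmu Hx0 Het. unfold Gz, jf.
  set (y := exp t) in *. set (p0 := (y - x0)^2 + mu).
  assert (Hp0 : 0 < p0) by (unfold p0; assert (0 <= (y - x0)^2) by apply pow2_ge_0; lra).
  set (s := sqrt y). assert (Hs : 0 < s) by (apply sqrt_lt_R0; lra).
  assert (Hss : s * s = y) by (apply sqrt_sqrt; lra).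
  assert (HPI := PI_RGT_0).
  assert (Hsx : s / 6 <= sqrt (x0 * y / 9)).
  { rewrite <- (sqrt_square (s/6)) by lra. apply sqrt_le_1_alt. rewrite <- Hss. assert (0 <= (x0 - 1/4) * (s*s)) by (apply Rmult_le_pos; nra). lra. }
  rewrite sqrt_mult; [| lra | apply Rmult_le_pos; [apply Rmult_le_pos|]; lra].
  set (r := sqrt p0). assert (Hr : 0 < r) by (apply sqrt_lt_R0; auto).
  apply Rle_trans with ((mu + 2 * y / K) * (PI / (r * (s/6)))).
  - apply Rmult_le_compat_l. assert (0 < 2 * y / K) by (apply Rdiv_lt_0_compat; lra). lra.
    unfold Rdiv. apply Rmult_le_compat_l. lra. apply Rinv_le_contravar. nra.
    apply Rmult_le_compat_l; lra.
  - rewrite <- Hss. apply Rle_trans with (6 * PI * (8 * mu + 2 / K) * (s / r)).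
    + assert (E : (mu + 2 * (s * s) / K) * (PI / (r * (s / 6))) = 6 * PI * (mu / s + 2 * s / K) * / r) by (field; lra).
      rewrite E.
      assert (Hk : mu / s + 2 * s / K <= (8*mu + 2/K) * s).
      { assert (mu / s <= 8 * mu * s).
        { apply Rmult_le_reg_r with s; auto. unfold Rdiv. rewrite Rmult_assoc, Rinv_l by lra. nra. }
        assert (E2 : (8*mu + 2/K) * s = 8 * mu * s + 2 * s / K) by (field; lra). lra. }
      replace (6 * PI * (8 * mu + 2 / K) * (s / r)) with (6 * PI * ((8 * mu + 2 / K) * s) * / r) by (unfold Rdiv; ring).
      apply Rmult_le_compat_r. left; apply Rinv_0_lt_compat; auto.
      apply Rmult_le_compat_l. lra. exact Hk.
    + right. reflexivity.
Qed.

Definition Bconst K mu :=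
  2 * (/ K * (ln (4 + 4 * (1/288) * PI^2 / mu) / sqrt (1/288)))
  + 6 * PI * (8 * mu + 2 / K) * (24 * ln (4 + 4 * 1 * 5^2 / (64 * mu)) + 12).

Theorem partB K nu m c x0 mu ph0 (mz : Z) A B :
  0 < K -> 0 < mu -> 1/4 <= x0 <= 4 -> nu = - K * x0 * cos ph0 -> m = K * x0 * sin ph0 ->
  m = IZR mz -> 1/8 <= exp A -> A <= B ->
  Rabs (RInt (fun t => RInt (fun f => cos (Psi K nu m c t f)) 0 (2*PI)) A B) <= Bconst K mu.
Proof.
  intros HK Hmu Hx0 Hnu Hm Hmz HA HAB.
  assert (HL := Hlam0 K mu HK Hmu).
  rewrite (main_ident K nu m c (K^2*mu) HL mz Hmz A B).
  assert (HB : 1/8 <= exp B).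
  { destruct (Rle_lt_or_eq_dec _ _ HAB). left; apply exp_increasing in r; lra. rewrite <- e; auto. }
  assert (Hmono : forall t, A <= t -> 1/8 <= exp t).
  { intros t Ht. destruct (Rle_lt_or_eq_dec _ _ Ht). apply exp_increasing in r; lra. rewrite <- e; auto. }
  assert (W1 := Wbound K nu m c x0 mu ph0 HK Hmu Hx0 Hnu Hm B HB).
  assert (W2 := Wbound K nu m c x0 mu ph0 HK Hmu Hx0 Hnu Hm A HA).
  assert (Hint : Rabs (RInt (fun t => RInt (Zf K nu m c (K ^ 2 * mu) t) 0 (2 * PI)) A B)
     <= 6 * PI * (8 * mu + 2 / K) * (24 * ln (4 + 4 * 1 * 5^2 / (64 * mu)) + 12)).
  { eapply Rle_trans. apply abs_RInt_le; auto. apply exo. intros; apply cZ; auto.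
    eapply Rle_trans. apply RInt_le with (g := fun t => 6 * PI * (8 * mu + 2 / K) * jf x0 mu t); auto.
    - apply exR_cont. intros. apply cont_abs. apply pc. intros; apply cZ; auto.
    - apply exR_cont. intros. apply (continuous_scal_r (K:=R_AbsRing) (V:=R_NormedModule) (6 * PI * (8 * mu + 2 / K)) (jf x0 mu)). apply jf_cont; auto.
    - intros t Ht. eapply Rle_trans. apply (Zbound K nu m c x0 mu ph0); auto. apply Hmono; lra.
      apply Gz_le; auto. apply Hmono; lra.
    - rewrite RInt_scalR by (apply exJ; auto).
      apply Rmult_le_compat_l. assert (HPI := PI_RGT_0). assert (0 < 2/K) by (apply Rdiv_lt_0_compat; lra). nra.
      apply Jbound; auto. }
  unfold Bconst. eapply Rle_trans. apply Rabs_triang.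
  unfold Rminus. eapply Rle_trans. apply Rplus_le_compat_r. apply Rabs_triang. rewrite Rabs_Ropp. lra.
Qed.

Definition th R0 nu (m : Z) x f := 2 * PI * (2 * R0 * x * cos f) + IZR m * f + nu * ln x.

Lemma h_eq R0 nu m x f : 0 < x ->
  Cmult (Cmult (e (2 * R0 * x * cos f)) (Cexp (0, IZR m * f))) (Cpow_pos x (-1, nu))
  = (Rdiv (cos (th R0 nu m x f)) x, Rdiv (sin (th R0 nu m x f)) x).
Proof.
  intro Hx. unfold e, Cpow_pos, Cexp, Cmult, RtoC, th. simpl.
  replace (-1 * ln x - nu * 0) with (- ln x) by ring.
  replace (-1 * 0 + nu * ln x) with (nu * ln x) by ring.
  rewrite exp_Ropp, exp_ln, exp_0 by auto.
  set (A := 2 * PI * (2 * R0 * x * cos f)). set (B := IZR m * f). set (G := nu * ln x).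
  repeat rewrite ?cos_plus, ?sin_plus.
  clearbody A B G. apply injective_projections; simpl; unfold Rdiv; ring.
Qed.

Lemma RInt_C_pair (f1 f2 : R -> R) a b : ex_RInt f1 a b -> ex_RInt f2 a b ->
  @RInt C_R_CompleteNormedModule (fun t => (f1 t, f2 t)) a b = (RInt f1 a b, RInt f2 a b).
Proof.
  intros H1 H2. apply is_RInt_unique.
  apply (is_RInt_fct_extend_pair (U:=R_NormedModule) (V:=R_NormedModule) (fun t => (f1 t, f2 t))); simpl;
  apply (RInt_correct (V:=R_CompleteNormedModule)); auto.
Qed.

Lemma c2_ln (g : R -> R -> R) x y : continuity_2d_pt g x y -> 0 < g x y ->
  continuity_2d_pt (fun u v => ln (g u v)) x y.
Proof. intros H H'. apply continuity_1d_2d_pt_comp; auto.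
  apply continuity_pt_filterlim. apply continuous_ln; auto. Qed.

Section PA.
Variables (R0 nu : R) (m : Z).

Definition Gc (c : R -> R) x := RInt (fun f => c (th R0 nu m x f) / x) 0 (2*PI).

Lemma c2_th (c : R -> R) y f : (forall z, continuity_pt c z) -> 0 < y ->
  continuity_2d_pt (fun u v => c (th R0 nu m u v) / u) y f.
Proof.
  intros Hc Hy. unfold th. apply c2_div; [| apply continuity_2d_pt_id1 | lra].
  apply continuity_1d_2d_pt_comp. apply Hc.
  apply continuity_2d_pt_plus. c2. apply continuity_2d_pt_mult. c2. apply c2_ln. c2. auto.
Qed.

Lemma Gc_cont (c : R -> R) x : (forall z, continuity_pt c z) -> 0 < x -> continuous (Gc c) x.
Proof.
  intros Hc Hx. unfold Gc. apply (param_cont (fun u v => c (th R0 nu m u v) / u) 0 (2*PI) x (x/2)).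
  assert (H := PI_RGT_0). lra. lra.
  intros y t Hy _. apply c2_th; auto. apply Rabs_lt_between in Hy. lra.
Qed.

Lemma Gc_ex (c : R -> R) x : (forall z, continuity_pt c z) -> 0 < x -> ex_RInt (fun f => c (th R0 nu m x f) / x) 0 (2*PI).
Proof. intros Hc Hx. apply exR_cont. intros. apply c2_cont1 with (f := fun u v => c (th R0 nu m u v) / u). apply c2_th; auto. Qed.

Lemma Iab_pair a b : 0 < a -> a <= b -> Iab R0 nu m a b = (RInt (Gc cos) a b, RInt (Gc sin) a b).
Proof.
  intros Ha Hab. unfold Iab.
  rewrite <- RInt_C_pair.
  - apply (RInt_ext (V:=C_R_CompleteNormedModule)). intros x Hx.
    rewrite Rmin_left, Rmax_right in Hx by lra.
    unfold Gc. rewrite <- RInt_C_pair.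
    + apply (RInt_ext (V:=C_R_CompleteNormedModule)). intros f _. apply h_eq. lra.
    + apply Gc_ex. apply continuity_cos. lra.
    + apply Gc_ex. apply continuity_sin. lra.
  - apply exR_cont. intros. apply Gc_cont. apply continuity_cos. rewrite Rmin_left, Rmax_right in H by lra. lra.
  - apply exR_cont. intros. apply Gc_cont. apply continuity_sin. rewrite Rmin_left, Rmax_right in H by lra. lra.
Qed.

Lemma Gc_change (c : R -> R) cc a b : (forall z, continuity_pt c z) -> (forall z, c z = cos (z + cc)) -> 0 < a -> a <= b ->
  RInt (Gc c) a b = RInt (fun t => RInt (fun f => cos (Psi (4*PI*R0) nu (IZR m) cc t f)) 0 (2*PI)) (ln a) (ln b).
Proof.
  intros Hc Hcc Ha Hab.
  rewrite <- (exp_ln a) at 1 by lra. rewrite <- (exp_ln b) at 1 by lra.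
  rewrite <- (RInt_comp (V:=R_CompleteNormedModule) (Gc c) exp exp).
  - apply RInt_extR. intros t _. unfold scal; simpl; unfold mult; simpl. unfold Gc.
    rewrite <- RInt_scalR by (apply Gc_ex; auto; apply exp_pos).
    apply RInt_extR. intros f _. rewrite Hcc. unfold th, Psi. rewrite ln_exp.
    field_simplify. f_equal. f_equal. ring. apply Rgt_not_eq, exp_pos.
  - intros. apply Gc_cont; auto. apply exp_pos.
  - intros. split. apply is_derive_exp. apply contR. auto_derive. auto.
Qed.
End PA.

Definition Cfin := 6 / (4 * PI * sqrt (1/288)) + 6 * PI * (8 + 1 / (2 * PI)) * 96.

Lemma ln_le' x y : 0 < x -> x <= y -> ln x <= ln y.
Proof. intros. destruct (Rle_lt_or_eq_dec _ _ H0). left; apply ln_increasing; auto. rewrite e; lra. Qed.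

Lemma final_arith R0 : 2 <= R0 ->
  Bconst (4 * PI * R0) (/ R0) <= Cfin * ln R0 / R0.
Proof.
  intro HR.
  assert (HPI := PI_RGT_0). assert (HP4 := PI_4).
  assert (HR0 : 0 < R0) by lra.
  set (L := ln R0).
  assert (Hl2 := ln_lt_2).
  assert (HL2 : ln 2 <= L) by (apply ln_le'; lra).
  assert (Hln4 : ln 4 = 2 * ln 2) by (replace 4 with (2*2) by ring; rewrite ln_mult by lra; ring).
  assert (Hln3 : ln 3 <= ln 4) by (apply ln_le'; lra).
  assert (Hl3R : ln (3 * R0) <= 3 * L) by (rewrite ln_mult by lra; fold L; lra).
  assert (Hl4R : ln (4 * R0) <= 3 * L) by (rewrite ln_mult by lra; fold L; lra).
  assert (Hs : 0 < sqrt (1/288)) by (apply sqrt_lt_R0; lra).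
  assert (HP2 : 0 < PI^2) by (apply pow_lt; lra).
  assert (HP16 : PI^2 <= 16) by (simpl; nra).
  assert (l1 : ln (4 + 4 * (1/288) * PI^2 / / R0) <= 3 * L).
  { eapply Rle_trans; [|exact Hl3R].
    replace (4 * (1/288) * PI^2 / / R0) with ((PI^2/72) * R0) by (field; lra).
    assert (0 <= PI^2/72 * R0) by (apply Rmult_le_pos; lra).
    apply ln_le'. lra. assert (PI^2/72 * R0 <= R0) by (apply Rle_trans with (1 * R0); [apply Rmult_le_compat_r; lra|lra]). lra. }
  assert (l2 : ln (4 + 4 * 1 * 5^2 / (64 * / R0)) <= 3 * L).
  { eapply Rle_trans; [|exact Hl4R].
    replace (4 * 1 * 5^2 / (64 * / R0)) with (100/64 * R0) by (field; lra).
    apply ln_le'; lra. }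
  unfold Bconst, Cfin.
  assert (T1 : 2 * (/ (4 * PI * R0) * (ln (4 + 4 * (1 / 288) * PI ^ 2 / / R0) / sqrt (1 / 288)))
     <= 6 / (4 * PI * sqrt (1/288)) * L / R0).
  { apply Rle_trans with (2 * (/ (4 * PI * R0) * (3 * L / sqrt (1 / 288)))).
    - apply Rmult_le_compat_l. lra. apply Rmult_le_compat_l. left; apply Rinv_0_lt_compat; nra.
      unfold Rdiv. apply Rmult_le_compat_r. left; apply Rinv_0_lt_compat; auto. auto.
    - right. field. lra. }
  assert (T2 : 6 * PI * (8 * / R0 + 2 / (4 * PI * R0)) * (24 * ln (4 + 4 * 1 * 5 ^ 2 / (64 * / R0)) + 12)
     <= 6 * PI * (8 + 1 / (2 * PI)) * 96 * L / R0).
  { apply Rle_trans with (6 * PI * (8 * / R0 + 2 / (4 * PI * R0)) * (96 * L)).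
    - apply Rmult_le_compat_l. assert (0 < 8 * / R0) by (apply Rmult_lt_0_compat; [lra| apply Rinv_0_lt_compat; lra]).
      assert (0 < 2 / (4 * PI * R0)) by (apply Rdiv_lt_0_compat; nra). nra. lra.
    - right. field. lra. }
  assert (E : (6 / (4 * PI * sqrt (1 / 288)) + 6 * PI * (8 + 1 / (2 * PI)) * 96) * L / R0 =
     6 / (4 * PI * sqrt (1/288)) * L / R0 + 6 * PI * (8 + 1 / (2 * PI)) * 96 * L / R0) by (field; lra).
  rewrite E. lra.
Qed.

Lemma Cmod_le_sum (x y : R) : Cmod (x, y) <= Rabs x + Rabs y.
Proof.
  unfold Cmod. simpl.
  rewrite <- (sqrt_square (Rabs x + Rabs y)) by (assert (H1 := Rabs_pos x); assert (H2 := Rabs_pos y); lra).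
  apply sqrt_le_1_alt.
  assert (Ex : x * (x * 1) = Rabs x * Rabs x) by (rewrite Rmult_1_r; rewrite <- Rabs_mult; rewrite Rabs_pos_eq; [ring| nra]).
  assert (Ey : y * (y * 1) = Rabs y * Rabs y) by (rewrite Rmult_1_r; rewrite <- Rabs_mult; rewrite Rabs_pos_eq; [ring| nra]).
  simpl. rewrite Ex, Ey. assert (H1 := Rabs_pos x); assert (H2 := Rabs_pos y). nra.
Qed.

Theorem mainTheorem12 :
  exists K : R, 0 < K /\
    forall (R0 nu : R) (m : Z),
      2 <= R0 ->
      1 / 4 <= sqrt (nu ^ 2 + IZR m ^ 2) / (4 * PI * R0) <= 4 ->
      forall a b : R, 1 / 8 <= a -> a < b ->
        Cmod (Iab R0 nu m a b) <= K * ln R0 / R0.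
Proof.
  exists (2 * Cfin). split.
  { unfold Cfin. assert (HPI := PI_RGT_0). assert (Hs : 0 < sqrt (1/288)) by (apply sqrt_lt_R0; lra).
    assert (0 < 6 / (4 * PI * sqrt (1 / 288))) by (apply Rdiv_lt_0_compat; nra).
    assert (0 < 1 / (2 * PI)) by (apply Rdiv_lt_0_compat; lra).
    assert (0 < 6 * PI * (8 + 1 / (2 * PI)) * 96) by nra. lra. }
  intros R0 nu m HR Hx0 a b Ha Hab.
  assert (HPI := PI_RGT_0).
  set (K := 4 * PI * R0). assert (HK : 0 < K) by (unfold K; nra).
  set (x0 := sqrt (nu ^ 2 + IZR m ^ 2) / (4 * PI * R0)) in *.
  assert (HS : K * x0 = sqrt (nu ^ 2 + IZR m ^ 2)) by (unfold x0, K; field; lra).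
  assert (HKx : 0 < K * x0) by nra.
  assert (HS2 : (K * x0) * (K * x0) = nu^2 + IZR m^2).
  { rewrite HS. apply sqrt_sqrt. assert (0 <= nu^2) by apply pow2_ge_0. assert (0 <= IZR m^2) by apply pow2_ge_0. lra. }
  destruct (polar (- nu / (K * x0)) (IZR m / (K * x0))) as [ph0 [Hc Hs]].
  { field_simplify; [|lra]. rewrite <- HS2. field. lra. }
  assert (Hnu : nu = - K * x0 * cos ph0) by (rewrite Hc; field; lra).
  assert (Hm : IZR m = K * x0 * sin ph0) by (rewrite Hs; field; lra).
  assert (Hmu : 0 < / R0) by (apply Rinv_0_lt_compat; lra).
  assert (HlA : 1/8 <= exp (ln a)) by (rewrite exp_ln; lra).
  assert (HAB : ln a <= ln b) by (apply ln_le'; lra).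
  rewrite Iab_pair by lra.
  eapply Rle_trans. apply Cmod_le_sum.
  rewrite (Gc_change R0 nu m cos 0) by (auto using continuity_cos; try lra; intro z; rewrite Rplus_0_r; auto).
  rewrite (Gc_change R0 nu m sin (- (PI/2))).
  2: apply continuity_sin.
  2: { intro z. replace (z + - (PI/2)) with (- (PI/2 - z)) by ring. rewrite cos_neg, cos_shift. auto. }
  2, 3: lra.
  fold K.
  assert (B1 := partB K nu (IZR m) 0 x0 (/ R0) ph0 m (ln a) (ln b) HK Hmu Hx0 Hnu Hm eq_refl HlA HAB).
  assert (B2 := partB K nu (IZR m) (- (PI/2)) x0 (/ R0) ph0 m (ln a) (ln b) HK Hmu Hx0 Hnu Hm eq_refl HlA HAB).
  assert (F := final_arith R0 HR). fold K in F.
  unfold Rdiv in *. lra.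
Qed.
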